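(* Let $A,B\subset\mathbb{R}^n$ be set-germs at $0$ with $0\in\overline{A}\cap\overline{B}$, and let $h:(\mathbb{R}^n,0)\to(\mathbb{R}^n,0)$ be a bi-Lipschitz homeomorphism (germ). Suppose that $B$ and $h(B)$ satisfy condition $(SSP)$. Then $D(A)\subset D(B)$ if and only if $D(h(A))\subset D(h(B))$.
   Context: A bi-Lipschitz homeomorphism germ is a homeomorphism between neighbourhoods of $0$ fixing $0$ with $K_1|x-y|\le|h(x)-h(y)|\le K_2|x-y|$ for some $0<K_1\le K_2$ near $0$. Direction set: $D(A)=\{a\in S^{n-1} : \exists\, \{x_i\}\subset A\setminus\{0\},\ x_i\to 0,\ x_i/\|x_i\|\to a\}$. A set-germ $A$ at $0$ with $0\in\overline{A}$ satisfies condition $(SSP)$ if for every sequence $\{a_m\}\subset\mathbb{R}^n$ with $a_m\to 0$ and $\lim_{m\to\infty} a_m/\|a_m\|\in D(A)$, there is a sequence $\{b_m\}\subset A$ with $\|a_m-b_m\|\ll\|a_m\|,\|b_m\|$ (i.e. $\|a_m-b_m\|/\|a_m\|\to0$ and $\|a_m-b_m\|/\|b_m\|\to0$). *)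

(* Defs.v *)
(* R^n is 'rV[R]_n over R : realType, with the
   product (matrix) topology; lengths use the Euclidean norm [enorm]. *)
From HB Require Import structures.
From mathcomp Require Import all_boot all_order all_algebra.
From mathcomp Require Import all_classical all_reals all_analysis.
Set Implicit Arguments. Unset Strict Implicit. Unset Printing Implicit Defensive.
Import Order.TTheory GRing.Theory Num.Theory.
Import numFieldNormedType.Exports.
Local Open Scope classical_set_scope.
Local Open Scope ring_scope.

Section Defs.
Context {R : realType} {n : nat}.
Local Notation vec := 'rV[R]_n.

Definition enorm (x : vec) : R := Num.sqrt (\sum_(i < n) x ord0 i ^+ 2).

Definition dir (x : vec) : vec := (enorm x)^-1 *: x.

Definition dirset (A : set vec) : set vec :=
  [set a | enorm a = 1 /\
     exists x : nat -> vec, (forall i, A (x i) /\ x i != 0) /\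
       x @ \oo --> (0 : vec) /\ dir \o x @ \oo --> a].

Definition SSP (A : set vec) : Prop :=
  forall a : nat -> vec,
    (forall m, a m != 0) -> a @ \oo --> (0 : vec) ->
    (exists l, dirset A l /\ dir \o a @ \oo --> l) ->
    exists b : nat -> vec, (forall m, A (b m) /\ b m != 0) /\
      (fun m => enorm (a m - b m) / enorm (a m)) @ \oo --> (0 : R) /\
      (fun m => enorm (a m - b m) / enorm (b m)) @ \oo --> (0 : R).

(* h is a bi-Lipschitz homeomorphism germ (R^n,0) -> (R^n,0), realized as a
   homeomorphism h : U -> V between open neighbourhoods U, V of 0 with
   inverse g, h 0 = 0, and bi-Lipschitz on a neighbourhood of 0. *)
Definition bilip_homeo_germ (h : vec -> vec) (U V : set vec) : Prop :=
  [/\ open U, open V, U 0, V 0 & h 0 = 0] /\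
  (exists g : vec -> vec,
     [/\ (forall x, U x -> V (h x)), (forall y, V y -> U (g y)),
         (forall x, U x -> g (h x) = x) & (forall y, V y -> h (g y) = y)] /\
     {within U, continuous h} /\ {within V, continuous g}) /\
  (exists K1 K2 r : R, [/\ 0 < K1, K1 <= K2, 0 < r &
     forall x y, U x -> U y -> enorm x < r -> enorm y < r ->
       K1 * enorm (x - y) <= enorm (h x - h y) /\
       enorm (h x - h y) <= K2 * enorm (x - y)]).

End Defs.

(* Main.v *)
Require Import Defs.
From HB Require Import structures.
From mathcomp Require Import all_boot all_order all_algebra.
From mathcomp Require Import all_classical all_reals all_analysis.
From mathcomp Require Import ring lra.
Import Order.TTheory GRing.Theory Num.Theory.
Import numFieldNormedType.Exports.
Local Open Scope classical_set_scope.
Local Open Scope ring_scope.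
Section Enorm.
Context {R : realType} {n : nat}.
Local Notation vec := 'rV[R]_n.
Implicit Types x y : vec.

Lemma sumsq_ge0 x : 0 <= \sum_(i < n) x ord0 i ^+ 2.
Proof. by apply: sumr_ge0 => i _; exact: sqr_ge0. Qed.

Lemma enorm_ge0 x : 0 <= enorm x.
Proof. exact: sqrtr_ge0. Qed.

Lemma enorm_sq x : enorm x ^+ 2 = \sum_(i < n) x ord0 i ^+ 2.
Proof. by rewrite /enorm sqr_sqrtr // sumsq_ge0. Qed.

Lemma enorm_eq0 {x} : enorm x = 0 -> x = 0.
Proof.
move=> /eqP; rewrite /enorm sqrtr_eq0 => H.
have H0 : \sum_(i < n) x ord0 i ^+ 2 = 0.
  by apply/eqP; rewrite eq_le H sumsq_ge0.
apply/rowP => i; rewrite mxE.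
have /psumr_eq0P := H0; move=> /(_ (fun j _ => sqr_ge0 _) i isT) /eqP.
by rewrite sqrf_eq0 => /eqP.
Qed.

Lemma enorm0 : enorm (0 : vec) = 0.
Proof.
rewrite /enorm (eq_bigr (fun _ => 0)); first by rewrite big1_eq sqrtr0.
by move=> i _; rewrite mxE expr0n.
Qed.

Lemma coord_le x i : `|x ord0 i| <= enorm x.
Proof.
rewrite -sqrtr_sqr /enorm ler_sqrt ?sumsq_ge0 //.
rewrite (bigD1 i) //= lerDl; apply: sumr_ge0 => j _; exact: sqr_ge0.
Qed.

Lemma enormN x : enorm (- x) = enorm x.
Proof. by rewrite /enorm; congr Num.sqrt; apply: eq_bigr => i _; rewrite mxE sqrrN. Qed.

Lemma enormB x y : enorm (x - y) = enorm (y - x).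
Proof. by rewrite -enormN opprB. Qed.

Lemma enormZ c x : enorm (c *: x) = `|c| * enorm x.
Proof.
rewrite /enorm (eq_bigr (fun i => c ^+ 2 * x ord0 i ^+ 2)); last first.
  by move=> i _; rewrite mxE exprMn.
by rewrite -mulr_sumr sqrtrM ?sqr_ge0 // sqrtr_sqr.
Qed.

Lemma dot_le x y : \sum_(i < n) x ord0 i * y ord0 i <= enorm x * enorm y.
Proof.
set a := enorm x; set b := enorm y.
have [a0|a0] := eqVneq a 0.
  rewrite a0 mul0r (enorm_eq0 a0) big1 // => i _; by rewrite mxE mul0r.
have [b0|b0] := eqVneq b 0.
  rewrite b0 mulr0 (enorm_eq0 b0) big1 // => i _; by rewrite mxE mulr0.
have ha : 0 < a by rewrite lt_neqAle eq_sym a0 enorm_ge0.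
have hb : 0 < b by rewrite lt_neqAle eq_sym b0 enorm_ge0.
set S := \sum_(i < n) x ord0 i * y ord0 i.
have H : 0 <= \sum_(i < n) (b * x ord0 i - a * y ord0 i) ^+ 2.
  by apply: sumr_ge0 => i _; exact: sqr_ge0.
have E : \sum_(i < n) (b * x ord0 i - a * y ord0 i) ^+ 2 =
   b ^+ 2 * \sum_(i < n) x ord0 i ^+ 2 - (2 * a * b) * S + a ^+ 2 * \sum_(i < n) y ord0 i ^+ 2.
  rewrite /S !mulr_sumr -sumrN -!big_split /=; apply: eq_bigr => i _.
  by rewrite sqrrB !exprMn; ring.
rewrite E -!enorm_sq -/a -/b in H.
have H2 : 0 <= 2 * a * b * (a * b - S) by rewrite mulrBr; move: H; lra.
rewrite pmulr_rge0 in H2; first by rewrite subr_ge0 in H2.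
by rewrite !mulr_gt0.
Qed.

Lemma enormD x y : enorm (x + y) <= enorm x + enorm y.
Proof.
rewrite -(@ler_pXn2r _ 2) // ?nnegrE ?addr_ge0 ?enorm_ge0 //.
rewrite enorm_sq (eq_bigr (fun i => x ord0 i ^+ 2 + (2 * (x ord0 i * y ord0 i) + y ord0 i ^+ 2))); last first.
  by move=> i _; rewrite mxE sqrrD; ring.
rewrite !big_split /= -mulr_sumr -!enorm_sq.
have := dot_le x y; nra.
Qed.

Lemma enorm_rev x y : `|enorm x - enorm y| <= enorm (x - y).
Proof.
rewrite ler_norml; apply/andP; split.
  have := enormD (y - x) x; rewrite subrK enormB; lra.
have := enormD (x - y) y; rewrite subrK; lra.
Qed.

Lemma sumsq_le_sqsum (I : finType) (F : I -> R) :
  \sum_i F i ^+ 2 <= (\sum_i `|F i|) ^+ 2.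
Proof.
pose K (a b : R) := a <= b ^+ 2 /\ 0 <= b.
have : K (\sum_i F i ^+ 2) (\sum_i `|F i|).
  apply: (big_rec2 K); first by rewrite /K expr0n /=; split.
  move=> i a b _ [H1 H2]; split; last by rewrite addr_ge0.
  rewrite sqrrD -real_normK ?num_real //.
  have : 0 <= `|F i| * b by rewrite mulr_ge0.
  nra.
by case.
Qed.

Lemma enorm_le_sum x : enorm x <= \sum_(i < n) `|x ord0 i|.
Proof.
rewrite -(@ler_pXn2r _ 2) // ?nnegrE ?enorm_ge0 ?sumr_ge0 //.
by rewrite enorm_sq sumsq_le_sqsum.
Qed.

Lemma mx_le_enorm x : `|x| <= enorm x.
Proof.
change (mx_norm x <= enorm x); rewrite mx_normrE; apply/bigmax_leP; split => /=.
  exact: enorm_ge0.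
by move=> [i j] _ /=; rewrite (ord1 i); exact: coord_le.
Qed.

Lemma coord_le_mx x i : `|x ord0 i| <= `|x|.
Proof.
change (`|x ord0 i| <= mx_norm x); rewrite mx_normrE.
exact: (le_bigmax _ (fun ij : 'I_1 * 'I_n => `|x ij.1 ij.2|) (ord0, i)).
Qed.

Lemma enorm_le_mx x : enorm x <= n%:R * `|x|.
Proof.
apply: (le_trans (enorm_le_sum x)).
have -> : n%:R * `|x| = \sum_(i < n) `|x| by rewrite sumr_const card_ord mulr_natl.
by apply: ler_sum => i _; exact: coord_le_mx.
Qed.

End Enorm.
Section Conv.
Context {R : realType} {n : nat}.
Local Notation vec := 'rV[R]_n.

Definition ecv (u : nat -> vec) (l : vec) :=
  forall e : R, 0 < e -> exists N, forall i, (N <= i)%N -> enorm (u i - l) < e.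
Definition rcv0 (f : nat -> R) :=
  forall e : R, 0 < e -> exists N, forall i, (N <= i)%N -> `|f i| < e.

Lemma near_oo (P : nat -> Prop) : (\forall i \near \oo, P i) <-> exists N, forall i, (N <= i)%N -> P i.
Proof.
split; first by move=> [N _ HN]; exists N => i Hi; apply: HN.
by move=> [N HN]; exists N => // i /= Hi; apply: HN.
Qed.

Lemma ecvP (u : nat -> vec) l : u @ \oo --> l <-> ecv u l.
Proof.
split.
  move=> /cvgrPdist_lt H e e0.
  have e1 : 0 < e / (n%:R + 1) by rewrite divr_gt0 // ltr_wpDl.
  have /near_oo [N HN] := H _ e1; exists N => i /HN Hi.
  apply: (le_lt_trans (enorm_le_mx _)); rewrite distrC in Hi.
  have hn : 0 <= (n%:R : R) by [].
  have := ler_wpM2l hn (ltW Hi).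
  rewrite mulrA => H1; apply: (le_lt_trans H1).
  rewrite ltr_pdivrMr ?ltr_wpDl //; nra.
move=> H; apply/cvgrPdist_lt => e e0; apply/near_oo.
have [N HN] := H e e0; exists N => i /HN Hi.
by apply: (le_lt_trans (mx_le_enorm _)); rewrite enormB.
Qed.

Lemma rcv0P (f : nat -> R) : f @ \oo --> 0 <-> rcv0 f.
Proof.
split.
  move=> /cvgrPdist_lt H e e0; have /near_oo [N HN] := H e e0.
  by exists N => i /HN; rewrite sub0r normrN.
move=> H; apply/cvgrPdist_lt => e e0; apply/near_oo.
by have [N HN] := H e e0; exists N => i /HN; rewrite sub0r normrN.
Qed.

End Conv.
Section BW.
Context {R : realType} {n : nat}.
Local Notation vec := 'rV[R]_n.

Lemma bw (s : nat -> vec) : (forall i, enorm (s i) <= 1) ->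
  exists phi : nat -> nat, (forall k, (phi k < phi k.+1)%N) /\ exists l, ecv (s \o phi) l.
Proof.
move=> s1.
pose K := [set v : vec | forall i, `[(-1 : R), 1]%classic (v ord0 i)].
have cK : compact K.
  by apply: (@rV_compact _ _ (fun=> `[(-1 : R), 1]%classic)) => _; exact: segment_compact.
have [l [_ cl]] : exists l, K l /\ cluster (s @ \oo) l.
  apply: (cK (s @ \oo)); apply/near_oo; exists 0%N => i _ j /=; rewrite in_itv /= -ler_norml.
  exact: le_trans (coord_le _ _) (s1 i).
have H : forall (e : R) N, 0 < e -> exists i, (N <= i)%N /\ `|l - s i| < e.
  move=> e N e0.
  have FA : (s @ \oo) (s @` [set i | (N <= i)%N]).
    by apply/near_oo; exists N => i Hi; exists i.
  have [v [[i Hi <-] Hb]] := cl _ (ball l e) FA (nbhsx_ballx l e e0).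
  by exists i; split => //; move: Hb; rewrite -ball_normE.
have Hc : forall k N : nat, {i | (N <= i)%N /\ `|l - s i| < k.+1%:R^-1}.
  move=> k N; apply: cid; apply: H; by rewrite invr_gt0.
pose phi := fix f k := match k with 0 => proj1_sig (Hc 0%N 0%N) | k'.+1 => proj1_sig (Hc k'.+1 (f k').+1) end.
have P1 k : `|l - s (phi k)| < k.+1%:R^-1.
  by case: k => [|k] /=; case: (Hc _ _) => i [].
have P2 k : (phi k < phi k.+1)%N.
  by rewrite /=; case: (Hc _ _) => i [].
exists phi; split => //; exists l; apply/ecvP/cvgrPdist_lt => e e0.
have := near_infty_natSinv_lt (PosNum e0); apply: filterS => k Hk.
exact: lt_trans (P1 k) Hk.
Qed.

End BW.
Section Utils.
Context {R : realType} {n : nat}.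
Local Notation vec := 'rV[R]_n.

Lemma incr_ge (phi : nat -> nat) : (forall k, (phi k < phi k.+1)%N) -> forall k, (k <= phi k)%N.
Proof. move=> H; elim=> [|k IH] //; exact: leq_ltn_trans IH (H k). Qed.

Lemma ecv_sub (u : nat -> vec) l phi : (forall k, (phi k < phi k.+1)%N) -> ecv u l -> ecv (u \o phi) l.
Proof.
move=> Hp H e e0; have [N HN] := H e e0; exists N => i Hi /=; apply: HN.
exact: leq_trans Hi (incr_ge phi Hp i).
Qed.

Lemma rcv0_sub (u : nat -> R) phi : (forall k, (phi k < phi k.+1)%N) -> rcv0 u -> rcv0 (u \o phi).
Proof.
move=> Hp H e e0; have [N HN] := H e e0; exists N => i Hi /=; apply: HN.
exact: leq_trans Hi (incr_ge phi Hp i).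
Qed.

Lemma ecv_shift (u : nat -> vec) l N : ecv u l -> ecv (fun i => u (i + N)%N) l.
Proof.
move=> H e e0; have [M HM] := H e e0; exists M => i Hi; apply: HM.
exact: leq_trans Hi (leq_addr _ _).
Qed.

Lemma enorm_gt0 {x : vec} : x != 0 -> 0 < enorm x.
Proof.
move=> x0; rewrite lt_neqAle enorm_ge0 andbT eq_sym; apply/eqP => /enorm_eq0 H.
by rewrite H eqxx in x0.
Qed.

Lemma enorm_dir {x : vec} : x != 0 -> enorm (dir x) = 1.
Proof.
move=> x0; rewrite /dir enormZ ger0_norm ?invr_ge0 ?enorm_ge0 // mulVf //.
by rewrite gt_eqF // enorm_gt0.
Qed.

Lemma ecv_norm1 (s : nat -> vec) l : ecv s l -> (forall i, enorm (s i) = 1) -> enorm l = 1.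
Proof.
move=> H s1; have [//|Hn] := eqVneq (enorm l) 1.
have e0 : 0 < `|enorm l - 1| by rewrite normr_gt0 subr_eq0.
have [N HN] := H _ e0.
have := enorm_rev (s N) l; rewrite s1 distrC => H1.
by have := le_lt_trans H1 (HN N (leqnn N)); rewrite ltxx.
Qed.

Lemma dirset_intro (A : set vec) a (x : nat -> vec) N : enorm a = 1 ->
  (forall i, (N <= i)%N -> A (x i) /\ x i != 0) -> ecv x 0 -> ecv (dir \o x) a -> dirset A a.
Proof.
move=> a1 Hx x0 xa; split => //; exists (fun i => x (i + N)%N); split.
  by move=> i; apply: Hx; rewrite leq_addl.
split; apply/ecvP; first exact: (ecv_shift _ _ _ x0).
exact: (ecv_shift _ _ _ xa).
Qed.

Lemma dirset_elim (A : set vec) a : dirset A a -> enorm a = 1 /\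
  exists x : nat -> vec, (forall i, A (x i) /\ x i != 0) /\ ecv x 0 /\ ecv (dir \o x) a.
Proof.
by move=> [a1 [x [Hx [/ecvP x0 /ecvP xa]]]]; split => //; exists x.
Qed.

Lemma dir_diff (u v : vec) : u != 0 -> v != 0 ->
  enorm (dir u - dir v) <= 2 * enorm (u - v) / enorm u.
Proof.
move=> u0 v0; have ha := enorm_gt0 u0; have hb := enorm_gt0 v0.
set a := enorm u in ha *; set b := enorm v in hb *.
have E : dir u - dir v = a^-1 *: (u - v) + (a^-1 - b^-1) *: v.
  by rewrite /dir scalerBr scalerBl addrA subrK.
rewrite E; apply: (le_trans (enormD _ _)); rewrite !enormZ -/b.
have E2 : `|a^-1 - b^-1| * b = `|b - a| / a.
  have F1 : (a^-1 - b^-1) * b = (b - a) / a.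
    by field; rewrite !gt_eqF.
  by rewrite -[X in _ * X = _](gtr0_norm hb) -normrM F1 normrM normfV (gtr0_norm ha).
rewrite E2 ger0_norm ?invr_ge0 ?(ltW ha) //.
have H1 : `|b - a| <= enorm (u - v) by rewrite enormB; exact: enorm_rev.
have H2 : `|b - a| / a <= enorm (u - v) / a by rewrite ler_pM2r // invr_gt0.
rewrite mulrC.
have -> : 2 * enorm (u - v) / a = enorm (u - v) / a + enorm (u - v) / a by field; rewrite gt_eqF.
by rewrite lerD2l.
Qed.

End Utils.
Section Transfer.
Context {R : realType} {n : nat}.
Local Notation vec := 'rV[R]_n.

Lemma ineq_aux (k1 k2 X Y P Q e : R) : 0 < k1 -> 0 < k2 -> 0 < Y -> 0 < Q -> 0 < e ->
  k1 * X <= P -> Q <= k2 * Y -> P / Q < e * k1 / (4 * k2) -> 2 * X / Y < e / 2.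
Proof.
move=> k10 k20 Y0 Q0 e0 H1 H2 H3.
rewrite ltr_pdivrMr // in H3.
have t0 : 0 < e * k1 / (4 * k2) by rewrite !divr_gt0 ?mulr_gt0.
have H4 : e * k1 / (4 * k2) * Q <= e * k1 / (4 * k2) * (k2 * Y) by rewrite ler_pM2l.
have E : e * k1 / (4 * k2) * (k2 * Y) = k1 * (e * Y / 4) by field; rewrite gt_eqF.
rewrite E in H4.
have H5 : k1 * X < k1 * (e * Y / 4) by apply: (le_lt_trans H1); exact: (lt_le_trans H3).
rewrite ltr_pM2l // in H5.
rewrite ltr_pdivrMr //.
have -> : e / 2 * Y = 2 * (e * Y / 4) by field.
lra.
Qed.

Lemma transfer (A1 B1 A2 B2 W : set vec) (F : vec -> vec) (k1 k2 rho rho0 : R) :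
  0 < k1 -> 0 < k2 -> 0 < rho -> 0 < rho0 -> W 0 -> F 0 = 0 ->
  (forall x y, W x -> W y -> enorm x < rho -> enorm y < rho ->
      k1 * enorm (x - y) <= enorm (F x - F y) /\ enorm (F x - F y) <= k2 * enorm (x - y)) ->
  (forall x, enorm x < rho0 -> W x) ->
  (forall x, A1 x -> W x -> A2 (F x)) ->
  (forall b : nat -> vec, (forall m, B2 (b m) /\ b m != 0) -> ecv b 0 ->
     exists q, ecv q 0 /\ exists N, forall m, (N <= m)%N -> B1 (q m) /\ W (q m) /\ F (q m) = b m) ->
  dirset A2 `<=` dirset B2 -> SSP B2 ->
  dirset A1 `<=` dirset B1.
Proof.
move=> k10 k20 rhop rho0p W0 F0 Lip Wball HA HB incl ssp c /dirset_elim [c1 [x [Ax [x0 xc]]]].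
have [N0 HN0] := x0 rho rhop.
have [N0' HN0'] := x0 rho0 rho0p.
pose M := maxn N0 N0'.
pose x' i := x (i + M)%N.
have x'P i : A1 (x' i) /\ x' i != 0 /\ W (x' i) /\ enorm (x' i) < rho.
  have h1 : (N0 <= i + M)%N by apply: leq_trans (leq_maxl N0 N0') _; exact: leq_addl.
  have h2 : (N0' <= i + M)%N by apply: leq_trans (leq_maxr N0 N0') _; exact: leq_addl.
  have := HN0 _ h1; have := HN0' _ h2; rewrite !subr0 => H1 H2.
  have [H3 H4] := Ax (i + M)%N.
  by split => //; split => //; split => //; apply: Wball.
have x'0 : ecv x' 0 := ecv_shift _ _ _ x0.
have x'c : ecv (dir \o x') c := ecv_shift _ _ _ xc.
pose p i := F (x' i).
have LipP i : k1 * enorm (x' i) <= enorm (p i) /\ enorm (p i) <= k2 * enorm (x' i).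
  have [_ [_ [W1 r1]]] := x'P i.
  have r0 : enorm (0 : vec) < rho by rewrite enorm0.
  by have := Lip (x' i) 0 W1 W0 r1 r0; rewrite /p F0 !subr0.
have p0 i : p i != 0.
  have [_ [x'0i _]] := x'P i.
  apply/eqP => pi0; have := (LipP i).1; rewrite pi0 enorm0 => H.
  have := mulr_gt0 k10 (enorm_gt0 x'0i); rewrite ltNge H //.
have pA i : A2 (p i) by have [H1 [_ [H2 _]]] := x'P i; exact: HA.
have pcv : ecv p 0.
  move=> e e0; have [N HN] := x'0 (e / k2) (divr_gt0 e0 k20).
  exists N => i Hi; have := HN i Hi; rewrite !subr0 => H.
  apply: (le_lt_trans (LipP i).2); by rewrite -ltr_pdivlMl // mulrC.
have [phi [Hphi [d dd]]] := bw (dir \o p) (fun i => ltac:(by rewrite /= (enorm_dir (p0 i)))).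
have d1 : enorm d = 1 := ecv_norm1 _ _ dd (fun i => enorm_dir (p0 (phi i))).
have pphi := ecv_sub _ _ _ Hphi pcv.
have dA2 : dirset A2 d.
  by apply: (dirset_intro _ _ (p \o phi) 0%N d1 _ pphi dd) => i _; exact: (conj (pA _) (p0 _)).
have dB2 := incl d dA2.
have [b [Bb [r1 _]]] := ssp (p \o phi) (fun m => p0 (phi m)) (proj2 (ecvP _ _) pphi)
   (ex_intro _ d (conj dB2 (proj2 (ecvP _ _) dd))).
move/rcv0P: r1 => r1.
have bcv : ecv b 0.
  move=> e e0; have [N1 HN1] := r1 1 ltr01.
  have [N2 HN2] := pphi (e / 2) (divr_gt0 e0 (ltr0Sn _ _)).
  exists (maxn N1 N2) => m Hm; rewrite subr0.
  have := HN1 m (leq_trans (leq_maxl _ _) Hm); have := HN2 m (leq_trans (leq_maxr _ _) Hm).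
  rewrite /= subr0 => H1.
  rewrite ger0_norm ?divr_ge0 ?enorm_ge0 // ltr_pdivrMr ?enorm_gt0 // mul1r => H2.
  have := enormD (p (phi m)) (- (p (phi m) - b m)); rewrite enormN opprB addrC subrK.
  lra.
have [q [qcv [N1 HN1]]] := HB b Bb bcv.
have [N2 HN2] := qcv rho rhop.
apply: (dirset_intro _ _ q (maxn N1 N2)) => //.
  move=> m Hm; have [Bq [Wq Fq]] := HN1 m (leq_trans (leq_maxl _ _) Hm); split => //.
  by apply/eqP => q0; have := (Bb m).2; rewrite -Fq q0 F0 eqxx.
move=> e e0.
have xc' := ecv_sub _ _ _ Hphi x'c.
have [N3 HN3] := xc' (e / 2) (divr_gt0 e0 (ltr0Sn _ _)).
have t0 : 0 < e * k1 / (4 * k2) by rewrite !divr_gt0 ?mulr_gt0.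
have [N4 HN4] := r1 _ t0.
exists (maxn (maxn N1 N2) (maxn N3 N4)) => m Hm.
have Hm1 : (N1 <= m)%N := leq_trans (leq_trans (leq_maxl N1 N2) (leq_maxl _ (maxn N3 N4))) Hm.
have Hm2 : (N2 <= m)%N := leq_trans (leq_trans (leq_maxr N1 N2) (leq_maxl _ (maxn N3 N4))) Hm.
have Hm3 : (N3 <= m)%N := leq_trans (leq_trans (leq_maxl N3 N4) (leq_maxr (maxn N1 N2) _)) Hm.
have Hm4 : (N4 <= m)%N := leq_trans (leq_trans (leq_maxr N3 N4) (leq_maxr (maxn N1 N2) _)) Hm.
have [Bq [Wq Fq]] := HN1 m Hm1.
have qr := HN2 m Hm2; rewrite subr0 in qr.
have H3 := HN3 m Hm3.
have H4 := HN4 m Hm4.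
rewrite /= ger0_norm ?divr_ge0 ?enorm_ge0 // in H4.
set u := x' (phi m) in H3 *; set v := q m.
have [_ [u0 [Wu ur]]] := x'P (phi m).
have v0 : v != 0.
  by apply/eqP => q0; have := (Bb m).2; rewrite -Fq -/v q0 F0 eqxx.
have Dd := dir_diff _ _ u0 v0.
have [L1 _] := Lip u v Wu Wq ur qr.
rewrite Fq in L1.
have [_ L2] := LipP (phi m).
have I := ineq_aux _ _ _ _ _ _ _ k10 k20 (enorm_gt0 u0) (enorm_gt0 (p0 (phi m))) e0 L1 L2 H4.
have := enormD (dir v - dir u) (dir u - c); rewrite addrA subrK [enorm (dir v - _)]enormB.
rewrite /= in H3.
lra.
Qed.

End Transfer.
Section Main.
Context {R : realType} {n : nat}.
Local Notation vec := 'rV[R]_n.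

Lemma enorm_small (z : vec) (e : R) : 0 < e -> `|z| < e / (n%:R + 1) -> enorm z < e.
Proof.
move=> e0 Hi.
apply: (le_lt_trans (enorm_le_mx _)).
have hn : 0 <= (n%:R : R) by [].
have := ler_wpM2l hn (ltW Hi).
rewrite mulrA => H1; apply: (le_lt_trans H1).
rewrite ltr_pdivrMr ?ltr_wpDl //; nra.
Qed.

Lemma open_ball (W : set vec) : open W -> W 0 -> exists rho : R, 0 < rho /\ forall x, enorm x < rho -> W x.
Proof.
move=> oW W0; have := oW 0 W0; move/nbhs_norm0P => [e e0 He].
exists e; split => // x Hx; apply: He => /=.
exact: le_lt_trans (mx_le_enorm x) Hx.
Qed.

Lemma ecv_small (b : nat -> vec) (e : R) : ecv b 0 -> 0 < e -> exists N, forall m, (N <= m)%N -> enorm (b m) < e.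
Proof. by move=> H e0; have [N HN] := H e e0; exists N => m /HN; rewrite subr0. Qed.

Lemma cont_small (V : set vec) (g : vec -> vec) : open V -> V 0 -> g 0 = 0 ->
  {within V, continuous g} ->
  forall e : R, 0 < e -> exists d : R, 0 < d /\ forall y, V y -> enorm y < d -> enorm (g y) < e.
Proof.
move=> oV V0 g0; rewrite continuous_open_subspace // => cg e e0.
have := cg 0 (mem_set V0); rewrite /continuous_at g0 => /cvgrPdist_lt H.
have e1 : 0 < e / (n%:R + 1) by rewrite divr_gt0 // ltr_wpDl.
have := H _ e1; move/nbhs_norm0P => [d d0 Hd].
exists d; split => // y Vy yd; apply: enorm_small => //.
have := Hd y (le_lt_trans (mx_le_enorm y) yd); by rewrite /= sub0r normrN.
Qed.

End Main.

Theorem theorem5p9 (R : realType) (n : nat) (A B U V : set 'rV[R]_n)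
  (h : 'rV[R]_n -> 'rV[R]_n)
  (hA : closure A 0) (hB : closure B 0)
  (hh : bilip_homeo_germ h U V)
  (sB : SSP B) (shB : SSP (h @` (B `&` U))) :
  dirset A `<=` dirset B <->
  dirset (h @` (A `&` U)) `<=` dirset (h @` (B `&` U)).
Proof.
move: hh => [[oU oV U0 V0 h0] [[g [[hUV gVU ghU hgV] [ch cg]]] [K1 [K2 [r [K10 K12 r0 Lip]]]]]].
have g0 : g 0 = 0 by have := ghU 0 U0; rewrite h0.
have K20 : 0 < K2 := lt_le_trans K10 K12.
have [rU [rU0 HrU]] := open_ball _ oU U0.
have [rV [rV0 HrV]] := open_ball _ oV V0.
have gc := cont_small _ _ oV V0 g0 cg.
split => incl.
- have [d [d0 Hd]] := gc r r0.
  apply: (transfer (h @` (A `&` U)) (h @` (B `&` U)) A B V g (K2^-1) (K1^-1) d rV) => //.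
  + by rewrite invr_gt0.
  + by rewrite invr_gt0.
  + move=> x y Vx Vy xd yd.
    have [L1 L2] := Lip (g x) (g y) (gVU _ Vx) (gVU _ Vy) (Hd _ Vx xd) (Hd _ Vy yd).
    rewrite !hgV // in L1 L2; split.
      by rewrite mulrC ler_pdivrMr // mulrC.
    by rewrite mulrC ler_pdivlMr // mulrC.
  + by move=> x [a [Aa Ua] <-] _; rewrite ghU.
  + move=> b Bb bcv; exists (h \o b); split.
      move=> e e0.
      have [N1 HN1] := ecv_small _ _ bcv r0.
      have [N2 HN2] := ecv_small _ _ bcv rU0.
      have [N3 HN3] := ecv_small _ _ bcv (divr_gt0 e0 K20).
      exists (maxn N1 (maxn N2 N3)) => m Hm.
      have Hm1 : (N1 <= m)%N := leq_trans (leq_maxl _ _) Hm.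
      have Hm2 : (N2 <= m)%N := leq_trans (leq_trans (leq_maxl N2 N3) (leq_maxr N1 _)) Hm.
      have Hm3 : (N3 <= m)%N := leq_trans (leq_trans (leq_maxr N2 N3) (leq_maxr N1 _)) Hm.
      have r00 : enorm (0 : 'rV[R]_n) < r by rewrite enorm0.
      have [_ L2] := Lip (b m) 0 (HrU _ (HN2 m Hm2)) U0 (HN1 m Hm1) r00.
      rewrite h0 !subr0 in L2; rewrite subr0 /=.
      apply: (le_lt_trans L2); by rewrite -ltr_pdivlMl // mulrC HN3.
    have [N1 HN1] := ecv_small _ _ bcv rU0.
    exists N1 => m Hm; have Um := HrU _ (HN1 m Hm); split => /=.
      by exists (b m) => //; split => //; exact: (Bb m).1.
    by split; [exact: hUV | exact: ghU].
- apply: (transfer A B (h @` (A `&` U)) (h @` (B `&` U)) U h K1 K2 r rU) => //.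
  + by move=> x Ax Ux; exists x.
  + move=> b Bb bcv.
    have /choice [beta Hbeta] : forall m, exists y, (B `&` U) y /\ h y = b m.
      by move=> m; have [[y Hy Hyb] _] := Bb m; exists y.
    exists beta; split; last by exists 0%N => m _; have [[Bm Um] hm] := Hbeta m.
    move=> e e0; have [d [d0 Hd]] := gc e e0.
    have [N HN] := ecv_small _ _ bcv d0.
    exists N => m Hm; rewrite subr0.
    have [[Bm Um] hm] := Hbeta m.
    have -> : beta m = g (b m) by rewrite -hm ghU.
    by apply: Hd; [rewrite -hm; exact: hUV | exact: HN].
Qed.
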